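(* For $0<r<1$ and $c>0$, the topological space $\mathbb{Z}((T))_{r,\le c}$ is compact.
   Context: $\mathbb{Z}((T))_{r,\le c}$ is the set of integer Laurent series $\sum_{n\gg-\infty}a_nT^n$ ($a_n\in\mathbb{Z}$, $a_n=0$ for $n$ sufficiently negative) with $\sum|a_n|r^n\le c$, with the $T$-adic topology given by the norm $\|f\|=\delta^{v_T(f)}$ for fixed $\delta\in(0,1)$, $v_T(f)$ being the smallest index of a nonzero coefficient. *)

(* Defs.v *)
From HB Require Import structures.
From mathcomp Require Import all_boot all_order all_algebra.
From mathcomp Require Import boolp classical_sets reals.
Set Implicit Arguments. Unset Strict Implicit. Unset Printing Implicit Defensive.
Import Order.TTheory GRing.Theory Num.Theory.
Local Open Scope ring_scope.
Local Open Scope classical_set_scope.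

(* An integer Laurent series sum_n a_n T^n is represented by its coefficient
   function a : int -> int, required to vanish for n sufficiently negative. *)
Definition laurent (a : int -> int) : Prop :=
  exists N : int, forall n : int, n < N -> a n = 0.

Definition vT_is (h : int -> int) (v : int) : Prop :=
  h v != 0 /\ forall n : int, n < v -> h n = 0.

Definition Tnorm {R : realType} (delta : R) (h : int -> int) : R :=
  match pselect (exists v, vT_is h v) with
  | left P => delta ^ (projT1 (cid P))
  | right _ => 0
  end.

Definition Topen {R : realType} (delta : R) (U : set (int -> int)) : Prop :=
  forall f, laurent f -> U f ->
    exists2 e : R, 0 < e &
      forall g, laurent g -> Tnorm delta (fun n => f n - g n) < e -> U g.

Definition Tcompact {R : realType} (delta : R) (S : set (int -> int)) : Prop :=
  forall F : set (set (int -> int)),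
    (forall U, F U -> Topen delta U) ->
    (forall f, S f -> exists2 U, F U & U f) ->
    exists (n : nat) (G : nat -> set (int -> int)),
      (forall i, (i < n)%N -> F (G i)) /\
      (forall f, S f -> exists2 i, (i < n)%N & G i f).

(* Z((T))_{r, <= c}: Laurent series with sum_n |a_n| r^n <= c.  The series has
   nonnegative terms, so its sum is <= c iff every finite partial sum over a
   window [N, N + K) of indices is <= c. *)
Definition ZTrc {R : realType} (r c : R) : set (int -> int) :=
  [set a | laurent a /\
     forall (N : int) (K : nat),
       \sum_(k < K) (`|a (N + k%:Z)|%:~R * r ^ (N + k%:Z)) <= c].

(* Main.v *)
Require Import Defs.
From HB Require Import structures.
From mathcomp Require Import all_boot all_order all_algebra.
From mathcomp Require Import boolp classical_sets reals.
From mathcomp Require Import ring lra zify.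
Import Order.TTheory GRing.Theory Num.Theory.
Local Open Scope ring_scope.

Lemma powsmall (R : realType) (q e : R) : 0 < q -> q < 1 -> 0 < e ->
  exists K : nat, forall n : nat, (K <= n)%N -> q ^+ n < e.
Proof.
move=> q0 q1 e0.
have qn0 : q != 0 by rewrite gt_eqF.
set t := q^-1 - 1.
have qt : q * (1 + t) = 1 by rewrite /t addrC subrK mulfV.
have t0 : 0 < t.
  rewrite /t subr_gt0 invf_gt1 //.
have B : forall n : nat, q ^+ n * (1 + n%:R * t) <= 1.
  elim=> [|n IH]; first by rewrite expr0 mul0r addr0 mulr1.
  have h0 : 0 <= q ^+ n by rewrite exprn_ge0 // ltW.
  have -> : q ^+ n.+1 * (1 + n.+1%:R * t) = q ^+ n * (1 + q * n%:R * t).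
    rewrite exprSr -mulrA; congr (_ * _); rewrite mulrSr.
    by transitivity (q * (1 + t) + q * n%:R * t); [ring | rewrite qt].
  apply: le_trans IH; apply: ler_wpM2l => //.
  rewrite lerD2l -mulrA; apply: ler_piMl; [by rewrite mulr_ge0 // ltW | exact: ltW].
have et0 : 0 < e * t by rewrite mulr_gt0.
exists (Num.Def.archi_bound ((e * t)^-1)) => n Kn.
have ei0 : 0 <= (e * t)^-1 by rewrite invr_ge0 ltW.
have hb := archi_boundP ei0.
have hn : (e * t)^-1 < n%:R.
  by apply: lt_le_trans hb _; rewrite ler_nat.
have h1 : 1 < e * t * n%:R.
  rewrite -{1}(mulfV (lt0r_neq0 et0)) ltr_pM2l //.
have h0 : 0 <= q ^+ n by rewrite exprn_ge0 // ltW.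
have := B n.
nra.
Qed.

Definition cov (F : set (set (int -> int))) (A : (int -> int) -> Prop) : Prop :=
  exists (n : nat) (G : nat -> set (int -> int)),
    (forall i, (i < n)%N -> F (G i)) /\
    (forall f, A f -> exists2 i, (i < n)%N & G i f).

Lemma cov_sub F (A B : (int -> int) -> Prop) :
  (forall f, A f -> B f) -> cov F B -> cov F A.
Proof.
move=> AB [n [G [h1 h2]]]; exists n, G; split => // f /AB; exact: h2.
Qed.

Lemma cov_U F (A B : (int -> int) -> Prop) :
  cov F A -> cov F B -> cov F (fun f => A f \/ B f).
Proof.
move=> [n1 [G1 [h1 k1]]] [n2 [G2 [h2 k2]]].
exists (n1 + n2)%N, (fun i => if (i < n1)%N then G1 i else G2 (i - n1)%N); split.
  move=> i hi; case: ifP => hi1; first exact: h1.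
  apply: h2; lia.
move=> f [/k1 [i hi Gi]|/k2 [i hi Gi]].
  by exists i; [lia | rewrite hi].
exists (i + n1)%N; first lia.
rewrite ifF; last lia.
by rewrite addnK.
Qed.

Arguments cov_sub {F A B}.
Arguments cov_U {F A B}.

Definition Sub (S : set (int -> int)) (h : int -> int) (m : int) :=
  fun f => S f /\ forall n, n <= m -> f n = h n.

Definition upd (h : int -> int) (m x : int) : int -> int :=
  fun n => if n == m then x else h n.

Lemma coef_bound (R : realType) (r c : R) f n :
  ZTrc r c f -> `|f n|%:~R * r ^ n <= c.
Proof.
move=> [_ H]; have := H n 1%N; by rewrite big_ord1 /= addr0.
Qed.

Arguments coef_bound {R r c f} n.

Lemma step (R : realType) (r c : R) F h m : 0 < r -> 0 < c ->
  ~ cov F (Sub (ZTrc r c) h m) ->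
  exists x, ~ cov F (Sub (ZTrc r c) (upd h (m + 1) x) (m + 1)).
Proof.
move=> r0 c0 nc; apply/existsNP => Hall; apply: nc.
have Hc : forall x, cov F (Sub (ZTrc r c) (upd h (m + 1) x) (m + 1)).
  exact: Hall.
pose A (j : nat) := fun f => Sub (ZTrc r c) h m f /\ `|f (m + 1)| <= j%:Z.
have HA : forall j, cov F (A j).
  elim=> [|j IH].
    apply: cov_sub (Hc 0) => f [[Sf Hf] hj]; split => // n hn.
    rewrite /upd; case: eqP => [->|ne]; first lia.
    apply: Hf; lia.
  apply: cov_sub (cov_U (cov_U IH (Hc j.+1%:Z)) (Hc (- j.+1%:Z))).
  move=> f [[Sf Hf] hj].
  have [hl|hg] := leP `|f (m + 1)| j%:Z; first by left; left.
  have [e1|e2] : f (m + 1) = j.+1%:Z \/ f (m + 1) = - j.+1%:Z by lia.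
    left; right; split => // n hn.
    rewrite /upd; case: eqP => [->|ne]; first by [].
    apply: Hf; lia.
  right; split => // n hn.
  rewrite /upd; case: eqP => [->|ne]; first by [].
  apply: Hf; lia.
have rp : 0 < r ^ (m + 1) by rewrite exprz_gt0.
have cb0 : 0 <= c / r ^ (m + 1).
  by rewrite divr_ge0 // ltW.
have hB := archi_boundP cb0.
apply: cov_sub (HA (Num.Def.archi_bound (c / r ^ (m + 1)))) => f Sf; split => //.
have := coef_bound (m + 1) Sf.1.
rewrite -ler_pdivlMr // => hf.
have := le_lt_trans hf hB; rewrite -natr_absz ltr_nat => hlt.
lia.
Qed.

Fixpoint hseq (st : (int -> int) -> int -> int) (m0 : int) (k : nat) : int -> int :=
  match k with
  | 0%N => fun _ => 0
  | k'.+1 => upd (hseq st m0 k') (m0 + k'%:Z + 1) (st (hseq st m0 k') (m0 + k'%:Z))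
  end.

Lemma hseq_agree st m0 k j n : n <= m0 + k%:Z -> hseq st m0 (k + j) n = hseq st m0 k n.
Proof.
move=> hn; elim: j => [|j IH]; first by rewrite addn0.
rewrite addnS /= /upd; case: eqP => [e|_]; first lia.
exact: IH.
Qed.

Lemma hseq_agree2 st m0 k k' n : n <= m0 + k%:Z -> n <= m0 + k'%:Z ->
  hseq st m0 k n = hseq st m0 k' n.
Proof.
move=> h1 h2; have [le|le] := leqP k k'.
  by rewrite -(subnKC le) hseq_agree.
by rewrite -(subnKC (ltnW le)) hseq_agree.
Qed.

Theorem mainTheorem12 (R : realType) (r c delta : R) :
  0 < r -> r < 1 -> 0 < c -> 0 < delta -> delta < 1 ->
  Tcompact delta (ZTrc r c).
Proof.
move=> r0 r1 c0 d0 d1 F Fopen Fcov.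
set S := ZTrc r c.
have ci0 : 0 < c^-1 by rewrite invr_gt0.
have [K HK] := @powsmall R r c^-1 r0 r1 ci0.
set m0 : int := - K%:Z.
have S0 : forall f, S f -> forall n, n <= m0 -> f n = 0.
  move=> f Sf n hn; apply/eqP; apply: contraT => fn0.
  have := coef_bound n Sf.
  have -> : r ^ n = r ^- `|n|%N by rewrite exprnN; congr (_ ^ _); lia.
  have hp := HK `|n|%N ltac:(lia).
  have pp : 0 < r ^+ `|n|%N by rewrite exprn_gt0.
  have h1 : 1 <= `|f n|%:~R :> R.
    rewrite ler1z; lia.
  have h2 : c < (r ^+ `|n|%N)^-1.
    by rewrite -(invrK c) ltf_pV2 // ?posrE ?invr_gt0.
  have h3 : 0 < (r ^+ `|n|%N)^-1 by rewrite invr_gt0.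
  move=> h4; have : (r ^+ `|n|%N)^-1 <= c.
    apply: le_trans h4; rewrite ler_pMl //.
  by rewrite leNgt h2.
suff : cov F S by [].
apply: contrapT => nc0.
have nc : ~ cov F (Sub S (fun _ => 0) m0).
  move=> hc; apply: nc0; apply: cov_sub hc => f Sf; split => //; exact: S0.
have Hex : forall p : (int -> int) * int, exists x : int,
    ~ cov F (Sub S p.1 p.2) -> ~ cov F (Sub S (upd p.1 (p.2 + 1) x) (p.2 + 1)).
  move=> p; case: (pselect (cov F (Sub S p.1 p.2))) => [hc|hn]; first by exists 0.
  have [x hx] := @step R r c F p.1 p.2 r0 c0 hn; by exists x.
have [st Hst] := choice Hex.
set hs := hseq (fun h m => st (h, m)) m0.
have Hinv : forall k : nat, ~ cov F (Sub S (hs k) (m0 + k%:Z)).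
  elim=> [|k IH]; first by rewrite addr0.
  have := Hst (hs k, m0 + k%:Z) IH => /=.
  by have -> : m0 + k.+1%:Z = m0 + k%:Z + 1 by lia.
have nonempty : forall k : nat, exists g, Sub S (hs k) (m0 + k%:Z) g.
  move=> k; apply: contrapT => hne; apply: (Hinv k).
  exists 0%N, (fun _ => set0); split => // g Sg; case: hne; by exists g.
pose f := fun n => hs (`|n - m0|%N) n.
have fagree : forall (k : nat) n, n <= m0 + k%:Z -> f n = hs k n.
  move=> k n hn; rewrite /f /hs; apply: hseq_agree2 => //; lia.
have flaur : laurent f.
  exists (m0 + 1) => n hn; rewrite (fagree 0%N); last lia.
  by [].
have Sf : S f.
  split => // N K'.
  have [g [[_ Hg] Hag]] := nonempty (absz (N + K'%:Z - m0)%R).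
  apply: le_trans (Hg N K'); rewrite le_eqVlt; apply/orP; left; apply/eqP.
  apply: eq_bigr => i _; have := ltn_ord i => hi.
  rewrite (fagree (absz (N + K'%:Z - m0)%R)); last lia.
  by rewrite Hag //; lia.
have [U FU Uf] := Fcov f Sf.
have [e e0 He] := Fopen U FU f flaur Uf.
have [K2 HK2] := @powsmall R delta e d0 d1 e0.
set k := (absz (K2%:Z - m0)%R).
apply: (Hinv k).
exists 1%N, (fun _ => U); split => // g [Sg Hg].
exists 0%N => //.
apply: He; first by case: Sg.
rewrite /Tnorm; case: pselect => [P|_]; last exact: e0.
case: (cid P) => v [hv1 hv2] /=.
have vgt : m0 + k%:Z < v.
  rewrite ltNge; apply/negP => hv; move: hv1.
  by rewrite (fagree k) // Hg // subrr eqxx.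
move: vgt; rewrite /k /m0 => vgt.
have [p ev] : exists p : nat, v = p%:Z by exists `|v|%N; lia.
rewrite ev in vgt *.
change (delta ^+ p < e); apply: HK2; lia.
Qed.
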